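(* Let $n\ge 2$, $1\le r\le n-1$, and let $p(q)=q^n+a_rq^r+a_{r-1}q^{r-1}+\dots+a_1q+a_0$ with $a_0,\dots,a_r\in\mathbb{H}$ and $a_r\neq 0$. Put $\lambda=\big(\max_{0\le j\le r}|a_j|\big)^{1/n}$. Then every zero $q\in\mathbb{H}$ of $p$ satisfies $$|q|\le \lambda+\lambda^2+\dots+\lambda^{r+1}.$$
   Context: $\mathbb{H}$ denotes the real quaternions with the Euclidean norm $|q|=\sqrt{q\bar q}$. The polynomial $p$ (whose coefficients of $q^{r+1},\dots,q^{n-1}$ vanish) has coefficients written to the left of the powers and is evaluated at $q\in\mathbb{H}$ by direct substitution, $p(q)=q^n+a_rq^r+\dots+a_1q+a_0$; a zero of $p$ is a $q\in\mathbb{H}$ with $p(q)=0$. *)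

(* Defs.v *)
From mathcomp Require Import all_boot all_order all_algebra.
From mathcomp Require Import all_classical all_reals all_analysis.
Set Implicit Arguments. Unset Strict Implicit. Unset Printing Implicit Defensive.
Import Order.TTheory GRing.Theory Num.Theory.
Local Open Scope ring_scope.

(* Real quaternions q = q0 + q1 i + q2 j + q3 k. *)
Record quat (R : realType) := Quat { q0 : R; q1 : R; q2 : R; q3 : R }.

Section Quat.
Variable R : realType.
Implicit Types p q : quat R.

Definition qzero : quat R := Quat 0 0 0 0.
Definition qone : quat R := Quat 1 0 0 0.
Definition qadd p q : quat R :=
  Quat (q0 p + q0 q) (q1 p + q1 q) (q2 p + q2 q) (q3 p + q3 q).
(* Hamilton product: i^2 = j^2 = k^2 = ijk = -1 *)
Definition qmul p q : quat R :=
  Quat (q0 p * q0 q - q1 p * q1 q - q2 p * q2 q - q3 p * q3 q)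
       (q0 p * q1 q + q1 p * q0 q + q2 p * q3 q - q3 p * q2 q)
       (q0 p * q2 q - q1 p * q3 q + q2 p * q0 q + q3 p * q1 q)
       (q0 p * q3 q + q1 p * q2 q - q2 p * q1 q + q3 p * q0 q).
Definition qnorm q : R :=
  Num.sqrt (q0 q ^+ 2 + q1 q ^+ 2 + q2 q ^+ 2 + q3 q ^+ 2).
Definition qpow q (k : nat) : quat R := iter k (qmul q) qone.

(* p(q) = q^n + a_r q^r + ... + a_1 q + a_0, coefficients on the left *)
Definition qpoly_eval (n r : nat) (a : nat -> quat R) q : quat R :=
  qadd (qpow q n)
       (foldr (fun j acc => qadd (qmul (a j) (qpow q j)) acc) qzero (iota 0 r.+1)).
End Quat.

(* Main.v *)
Require Import Defs.
From mathcomp Require Import all_boot all_order all_algebra.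
From mathcomp Require Import all_classical all_reals all_analysis.
From mathcomp Require Import ring lra zify.
From Stdlib Require Import Lia.
Import Order.TTheory GRing.Theory Num.Theory.
Local Open Scope ring_scope.

Section H.
Variable R : realType.
Implicit Types p q : quat R.

Definition N2 q : R := q0 q ^+ 2 + q1 q ^+ 2 + q2 q ^+ 2 + q3 q ^+ 2.

Lemma N2_ge0 q : 0 <= N2 q.
Proof. rewrite /N2; by rewrite !addr_ge0 ?sqr_ge0. Qed.

Lemma qnorm_ge0 q : 0 <= qnorm q.
Proof. exact: sqrtr_ge0. Qed.

Lemma qnorm_mul p q : qnorm (qmul p q) = qnorm p * qnorm q.
Proof.
rewrite /qnorm -sqrtrM; last exact: (N2_ge0 p).
congr Num.sqrt; rewrite /=; ring.
Qed.

Lemma qnorm_one : qnorm (qone R) = 1.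
Proof. by rewrite /qnorm /= expr0n /= expr1n !addr0 sqrtr1. Qed.

Lemma qnorm_zero : qnorm (qzero R) = 0.
Proof. by rewrite /qnorm /= expr0n /= !addr0 sqrtr0. Qed.

Lemma qnorm_pow q k : qnorm (qpow q k) = qnorm q ^+ k.
Proof.
elim: k => [|k IH]; first by rewrite expr0 qnorm_one.
by rewrite /qpow iterS -/(qpow q k) qnorm_mul IH exprS.
Qed.

Lemma qnorm_add p q : qnorm (qadd p q) <= qnorm p + qnorm q.
Proof.
set d := q0 p * q0 q + q1 p * q1 q + q2 p * q2 q + q3 p * q3 q.
have hd : d <= Num.sqrt (N2 p) * Num.sqrt (N2 q).
  rewrite -sqrtrM ?N2_ge0 //.
  apply: (le_trans (ler_norm d)).
  rewrite -sqrtr_sqr ler_sqrt; last by rewrite mulr_ge0 ?N2_ge0.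
  rewrite /N2 /d -subr_ge0.
  have -> : (q0 p ^+ 2 + q1 p ^+ 2 + q2 p ^+ 2 + q3 p ^+ 2) *
     (q0 q ^+ 2 + q1 q ^+ 2 + q2 q ^+ 2 + q3 q ^+ 2) -
     (q0 p * q0 q + q1 p * q1 q + q2 p * q2 q + q3 p * q3 q) ^+ 2 =
     (q0 p * q1 q - q1 p * q0 q) ^+ 2 + (q0 p * q2 q - q2 p * q0 q) ^+ 2 +
     (q0 p * q3 q - q3 p * q0 q) ^+ 2 + (q1 p * q2 q - q2 p * q1 q) ^+ 2 +
     (q1 p * q3 q - q3 p * q1 q) ^+ 2 + (q2 p * q3 q - q3 p * q2 q) ^+ 2 by ring.
  by rewrite !addr_ge0 ?sqr_ge0.
have h1 : qnorm p + qnorm q = Num.sqrt ((qnorm p + qnorm q) ^+ 2).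
  by rewrite sqrtr_sqr ger0_norm // addr_ge0 ?qnorm_ge0.
have e1 : qnorm p ^+ 2 = N2 p by rewrite sqr_sqrtr // N2_ge0.
have e2 : qnorm q ^+ 2 = N2 q by rewrite sqr_sqrtr // N2_ge0.
rewrite h1 {1}/qnorm ler_sqrt; last by rewrite sqr_ge0.
have -> : q0 (qadd p q) ^+ 2 + q1 (qadd p q) ^+ 2 + q2 (qadd p q) ^+ 2 +
  q3 (qadd p q) ^+ 2 = N2 p + N2 q + 2 * d by rewrite /N2 /d /=; ring.
rewrite -e1 -e2; move: hd; rewrite -/(qnorm p) -/(qnorm q) => hd.
nra.
Qed.

Lemma qnorm_sum (a : nat -> quat R) q s :
  qnorm (foldr (fun j acc => qadd (qmul (a j) (qpow q j)) acc) (qzero R) s)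
  <= \sum_(j <- s) qnorm (a j) * qnorm q ^+ j.
Proof.
elim: s => [|j s IH]; first by rewrite big_nil qnorm_zero.
rewrite big_cons /=; apply: (le_trans (qnorm_add _ _)).
by rewrite qnorm_mul qnorm_pow lerD2l.
Qed.

Lemma qnorm_opp p q : qadd p q = qzero R -> qnorm p = qnorm q.
Proof.
case: p q => a b c d [e f g h] [] /= /eqP; rewrite addr_eq0 => /eqP -> /eqP.
rewrite addr_eq0 => /eqP -> /eqP; rewrite addr_eq0 => /eqP -> /eqP.
rewrite addr_eq0 => /eqP ->.
by rewrite /qnorm /= !sqrrN.
Qed.
End H.

Lemma g (R : realType) (lambda x : R) j k : 0 <= lambda -> 0 <= x -> lambda < x ->
 lambda ^+ (j + k).+1 * x ^+ j <= x ^+ (j + k) * lambda ^+ j.+1.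
Proof.
move=> l0 x0 lx.
    have hk : lambda ^+ k <= x ^+ k by rewrite lerXn2r // ?nnegrE // ltW //.
    have c0 : 0 <= lambda ^+ j.+1 * x ^+ j by rewrite mulr_ge0 ?exprn_ge0 //.
    have -> : lambda ^+ (j + k).+1 * x ^+ j = lambda ^+ j.+1 * x ^+ j * lambda ^+ k.
      by rewrite -addSn exprD mulrAC.
    have -> : x ^+ (j + k) * lambda ^+ j.+1 = lambda ^+ j.+1 * x ^+ j * x ^+ k.
      by rewrite exprD mulrC mulrA.
    by rewrite ler_wpM2l.
Qed.

Theorem theorem3 (R : realType) (n r : nat) (a : nat -> quat R) (q : quat R) :
  (2 <= n)%N -> (1 <= r)%N -> (r <= n - 1)%N ->
  a r <> qzero R ->
  qpoly_eval n r a q = qzero R ->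
  let lambda := (\big[Num.max/0]_(j < r.+1) qnorm (a j)) `^ (n%:R^-1) in
  qnorm q <= \sum_(1 <= k < r.+2) lambda ^+ k.
Proof.
move=> hn hr hrn _ hp; cbv zeta.
set M := \big[Num.max/0]_(j < r.+1) qnorm (a j).
set lambda := M `^ _.
have Ma j : (j < r.+1)%N -> qnorm (a j) <= M.
  move=> hj; exact: (le_bigmax 0 (fun i : 'I_r.+1 => qnorm (a i)) (Ordinal hj)).
have M0 : 0 <= M by exact: (le_trans (@qnorm_ge0 R (a 0%N)) (Ma 0%N isT)).
have l0 : 0 <= lambda by rewrite /lambda powR_ge0.
have lM : lambda ^+ n = M.
  rewrite /lambda -powR_mulrn ?powR_ge0 // -powRrM mulVf ?powRr1 //.
  by rewrite pnatr_eq0 -lt0n (leq_trans _ hn).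
set x := qnorm q.
have x0 : 0 <= x by exact: (@qnorm_ge0 R q).
have hS : lambda <= \sum_(1 <= k < r.+2) lambda ^+ k.
  rewrite big_nat_recl // expr1 lerDl.
  by apply: sumr_ge0 => i _; rewrite exprn_ge0.
have [xl|lx] := leP x lambda; first exact: le_trans xl hS.
have xpos : 0 < x by exact: le_lt_trans lx.
have key : x ^+ n <= \sum_(0 <= j < r.+1) M * x ^+ j.
  move: hp; rewrite /qpoly_eval => /qnorm_opp; rewrite qnorm_pow -/x => ->.
  apply: (le_trans (@qnorm_sum R a q _)).
  rewrite -/x /index_iota subn0 big_seq_cond [X in _ <= X]big_seq_cond.
  apply: ler_sum => j; rewrite andbT mem_iota add0n => /andP [_ hj].
  by rewrite ler_wpM2r ?exprn_ge0 ?Ma.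
have key2 : x ^+ n <= x ^+ n.-1 * \sum_(1 <= k < r.+2) lambda ^+ k.
  apply: (le_trans key).
  rewrite big_add1 /= mulr_sumr; apply: ler_sum_nat => j /andP [_ hj].
  rewrite -lM.
  have hjn : (j <= n.-1)%N by lia.
  have gen : forall k, lambda ^+ (j + k).+1 * x ^+ j <= x ^+ (j + k) * lambda ^+ j.+1.
    by move=> k; apply: g.
  have := gen (n.-1 - j)%N.
  have e1 : ((j + (n.-1 - j)).+1 = n)%N by lia.
  have e2 : ((j + (n.-1 - j)) = n.-1)%N by lia.
  by rewrite e1 e2.
have hn1 : n = n.-1.+1 by lia.
rewrite hn1 exprS mulrC in key2.
by rewrite -(ler_pM2l (exprn_gt0 n.-1 xpos)).
Qed.
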